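(* Let $S=\langle T,\Pi,C\rangle$ be a state space and let $(A_i,\psi_i)$, $1\le i\le k$, be abstractions of $S$ forming an additive abstraction system. Let $t,g\in T$ and let $\pi$ be a path from $t$ to $g$ in $S$ with $C(\pi)=\sum_{i=1}^k C^*_i(t_i,g_i)$. Then $C_j(\pi_j)=C^*_j(t_j,g_j)$ for all $j\in\{1,\dots,k\}$.
   Context: A state space is a weighted directed graph $S=\langle T,\Pi,C\rangle$ where $T$ is a finite set of states, $\Pi\subseteq T\times T$ is a set of directed edges, and $C:\Pi\to\mathbb{N}=\{0,1,2,\dots\}$. A path from $u$ to $v$ is a sequence of edges $\langle\pi^1,\dots,\pi^n\rangle$ with $\pi^j=(u^{j-1},u^j)\in\Pi$, $u^0=u$, $u^n=v$; its cost is $C(\pi)=\sum_j C(\pi^j)$. An abstract state space is $A_i=\langle T_i,\Pi_i,C_i,R_i\rangle$ with $T_i$ a set of abstract states, $\Pi_i\subseteq T_i\times T_i$, and edge weights $C_i,R_i:\Pi_i\to\mathbb{N}$ (primary and residual cost), extended additively to paths. An abstraction of $S$ is a pair $(A_i,\psi_i)$ with $\psi_i:T\to T_i$ such that (1) for every $(u,v)\in\Pi$, $(\psi_i(u),\psi_i(v))\in\Pi_i$, and (2) for every $\pi=(u,v)\in\Pi$, $C_i(\pi_i)+R_i(\pi_i)\le C(\pi)$ where $\pi_i=(\psi_i(u),\psi_i(v))$. The system is additive if for every $\pi\in\Pi$, $\sum_{i=1}^k C_i(\pi_i)\le C(\pi)$. Write $t_i=\psi_i(t)$, and for a path $\pi=\langle\pi^1,\dots,\pi^n\rangle$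 in $S$ let $\pi_i=\langle\pi^1_i,\dots,\pi^n_i\rangle$ be its edgewise image, a path in $A_i$. Define $C^*_i(x,y)=\min\{C_i(\rho):\rho\text{ a path from }x\text{ to }y\text{ in }A_i\}$. *)

(* Defs.v *)
From mathcomp Require Import all_boot.
From Stdlib Require Import ClassicalEpsilon.
Set Implicit Arguments. Unset Strict Implicit. Unset Printing Implicit Defensive.

(* A path in a directed graph with edge relation [E] from [u] to [v] is
   represented by its vertex sequence [u :: p]: consecutive vertices are
   joined by edges and the last vertex is [v]. The empty [p] is the
   path with no edges (from u to u). *)
Definition is_path {V : Type} (E : rel V) (u v : V) (p : seq V) : Prop :=
  path E u p /\ last u p = v.

Definition pcost {V : Type} (W : V -> V -> nat) (u : V) (p : seq V) : nat :=
  sumn (pairmap W u p).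

(* C^*(x,y): the minimum cost of a path from x to y (chosen by
   classical description; well defined whenever some path exists). *)
Definition Cstar {V : Type} (E : rel V) (W : V -> V -> nat) (x y : V) : nat :=
  epsilon (inhabits 0%N)
    (fun n => (exists p, is_path E x y p /\ pcost W x p = n) /\
              (forall p, is_path E x y p -> n <= pcost W x p)).

Definition is_abstraction {T TA : Type} (E : rel T) (C : T -> T -> nat)
    (EA : rel TA) (CA RA : TA -> TA -> nat) (psi : T -> TA) : Prop :=
  (forall u v, E u v -> EA (psi u) (psi v)) /\
  (forall u v, E u v -> CA (psi u) (psi v) + RA (psi u) (psi v) <= C u v).

Definition additive_system {T : Type} (k : nat) (TA : 'I_k -> Type)
    (E : rel T) (C : T -> T -> nat)
    (CA : forall i, TA i -> TA i -> nat) (psi : forall i, T -> TA i) : Prop :=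
  forall u v, E u v -> \sum_(i < k) CA i (psi i u) (psi i v) <= C u v.

(* Main.v *)
Require Import Defs.
From mathcomp Require Import all_boot.
From Stdlib Require Import Classical ClassicalEpsilon Lia.

Lemma exists_min (P : nat -> Prop) : (exists n, P n) ->
  exists m, P m /\ forall n, P n -> m <= n.
Proof.
move=> [n Pn].
suff H : forall N n, n <= N -> P n -> exists m, P m /\ forall n, P n -> m <= n.
  exact: (H n n (leqnn n) Pn).
elim=> [|N IH] n0 Hn0 Pn0.
  exists n0; split=> // n1 _; move: Hn0; rewrite leqn0 => /eqP ->; done.
destruct (classic (exists m, m < n0 /\ P m)) as [[m [Hm Pm]]|Hno].
  apply: (IH m) => //; exact: leq_trans Hm Hn0.
exists n0; split=> // n1 Pn1; rewrite leqNgt; apply/negP => Hlt; apply: Hno; eauto.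
Qed.

Lemma Cstar_spec {V : Type} (E : rel V) (W : V -> V -> nat) x y p :
  is_path E x y p -> Cstar E W x y <= pcost W x p.
Proof.
move=> Hp; rewrite /Cstar.
set Q := fun n => _.
have: exists n, Q n.
  have [m [[q [Hq <-]] Hmin]] := exists_min (fun n => exists q, is_path E x y q /\ pcost W x q = n)
     (ex_intro _ _ (ex_intro _ p (conj Hp erefl))).
  exists (pcost W x q); split; first by eauto.
  move=> q' Hq'; apply: Hmin; eauto.
move=> /(epsilon_spec (inhabits 0) Q) [_ H]; exact: H.
Qed.

Lemma map_path_ok (T : Type) (E : rel T) (C : T -> T -> nat) TA (EA : rel TA)
  (CA RA : TA -> TA -> nat) (psi : T -> TA) :
  is_abstraction E C EA CA RA psi -> forall t g p, is_path E t g p ->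
  is_path EA (psi t) (psi g) (map psi p).
Proof.
move=> [H1 _] t g p [Hp Hl]; split.
  elim: p t Hp {Hl} => //= x p IH t /andP [e Hp]; rewrite H1 //=; exact: IH.
by rewrite last_map Hl.
Qed.

Lemma sum_le (T : finType) (E : rel T) (C : T -> T -> nat)
    (k : nat) (TA : 'I_k -> Type)
    (CA : forall i, TA i -> TA i -> nat) (psi : forall i, T -> TA i)
    (Hadd : additive_system E C CA psi) :
  forall p t, path E t p ->
  \sum_(i < k) pcost (CA i) (psi i t) (map (psi i) p) <= pcost C t p.
Proof.
elim=> [|x p IH] t /=.
  by move=> _; rewrite /pcost /= big1.
move=> /andP [e Hp]; rewrite /pcost /=.
rewrite big_split /= leq_add //; first exact: Hadd.
exact: IH.
Qed.

Lemma sum_eq_each k (a b : 'I_k -> nat) : (forall i, a i <= b i) ->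
  \sum_(i < k) b i <= \sum_(i < k) a i -> forall j, a j = b j.
Proof.
move=> Hab Hs j; move: Hs; rewrite (bigD1 j) //= (bigD1 j (P := predT)) //=.
have : \sum_(i < k | i != j) a i <= \sum_(i < k | i != j) b i by apply: leq_sum.
have := Hab j; move: (\sum_(i < k | i != j) a i) (\sum_(i < k | i != j) b i) (a j) (b j) => A B x y h1 h2 h3.
apply/eqP; rewrite eqn_leq h1 /=.
rewrite -(leq_add2r A); apply: leq_trans h3; by rewrite leq_add2l.
Qed.

Theorem lemma7 (T : finType) (E : rel T) (C : T -> T -> nat)
    (k : nat) (TA : 'I_k -> Type) (EA : forall i, rel (TA i))
    (CA RA : forall i, TA i -> TA i -> nat) (psi : forall i, T -> TA i)
    (Habs : forall i, is_abstraction E C (EA i) (CA i) (RA i) (psi i))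
    (Hadd : additive_system E C CA psi)
    (t g : T) (p : seq T)
    (Hp : is_path E t g p)
    (Hopt : pcost C t p = \sum_(i < k) Cstar (EA i) (CA i) (psi i t) (psi i g)) :
  forall j : 'I_k,
    pcost (CA j) (psi j t) (map (psi j) p) = Cstar (EA j) (CA j) (psi j t) (psi j g).
Proof.
move=> j; symmetry.
apply: (@sum_eq_each k (fun i => Cstar (EA i) (CA i) (psi i t) (psi i g))
                    (fun i => pcost (CA i) (psi i t) (map (psi i) p))).
  move=> i; apply: Cstar_spec; eapply map_path_ok; [exact: (Habs i)|exact: Hp].
rewrite -Hopt; apply: (@sum_le T E C k TA CA psi Hadd); by case: Hp.
Qed.
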